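(* Let $G$ be a path-pairable graph on $n$ vertices with diameter $d \geq 20$, and let $x,y$ be vertices with $d(x,y)=d$. For $i \geq 0$ let $S_i=\{z\in V(G): d(x,z)=i\}$, $s_i=|S_i|$, and $u_i=\sum_{j=0}^{i}s_j$. Then for every integer $k\geq 0$ with $u_{2k+1}\leq \frac{n}{2}$ we have $s_{2k}+s_{2k+1}\geq k$.
   Context: A graph $G$ on $n=2m$ vertices is path-pairable if for every partition of its vertex set into $m$ pairs $\{x_1,y_1\},\dots,\{x_m,y_m\}$ there exist pairwise edge-disjoint paths $P_1,\dots,P_m$ such that $P_i$ joins $x_i$ to $y_i$ for each $i$. $d(u,v)$ denotes the graph distance between vertices $u$ and $v$. *)

(* Defs.v *)
From mathcomp Require Import all_boot.
Set Implicit Arguments. Unset Strict Implicit. Unset Printing Implicit Defensive.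

Section Graph.
Variable T : finType.
Variable e : rel T.

Definition simple_graph : Prop := symmetric e /\ irreflexive e.

Definition walk_len (x y : T) (k : nat) : bool :=
  [exists p : k.-tuple T, path e x p && (last x p == y)].

(* graph distance: least k with a walk of length k from x to y
   (value #|T| if y is unreachable from x; irrelevant for connected graphs) *)
Definition dist (x y : T) : nat :=
  find (walk_len x y) (iota 0 #|T|).

Definition path_edges (x : T) (q : seq T) : seq {set T} :=
  [seq [set ab.1; ab.2] | ab <- zip (x :: q) q].

Definition is_gpath (x : T) (q : seq T) : bool :=
  path e x q && uniq (x :: q).

Definition pairing (P : {set {set T}}) : bool :=
  partition P [set: T] && [forall B in P, #|B| == 2].

Definition path_pairable : Prop :=
  ~~ odd #|T| /\
  forall P : {set {set T}}, pairing P ->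
    exists Q : {set T} -> T * seq T,
      (forall B, B \in P ->
         is_gpath (Q B).1 (Q B).2 /\ B = [set (Q B).1; last (Q B).1 (Q B).2]) /\
      (forall B1 B2, B1 \in P -> B2 \in P -> B1 != B2 ->
         forall E, E \in path_edges (Q B1).1 (Q B1).2 ->
                   E \notin path_edges (Q B2).1 (Q B2).2).

Definition layer (x : T) (i : nat) : {set T} := [set z | dist x z == i].
Definition s_ (x : T) (i : nat) : nat := #|layer x i|.
Definition u_ (x : T) (i : nat) : nat := \sum_(0 <= j < i.+1) s_ x j.

End Graph.

(* Main.v *)
Require Import Defs.
From mathcomp Require Import all_boot zify.
Set Implicit Arguments. Unset Strict Implicit. Unset Printing Implicit Defensive.

Section D.
Variable T : finType.
Variable e : rel T.

Lemma walk_lenP x y k :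
  reflect (exists p : seq T, [/\ size p = k, path e x p & last x p = y])
          (walk_len e x y k).
Proof.
apply: (iffP existsP) => [[p /andP[pp /eqP lp]]|[p [sp pp lp]]].
  by exists (val p); rewrite size_tuple.
have sp' : size p == k by rewrite sp.
by exists (Tuple sp'); rewrite /= pp lp eqxx.
Qed.

Lemma dist_le x y k : walk_len e x y k -> dist e x y <= k.
Proof.
move=> w; rewrite /dist.
case: (ltnP k #|T|) => hk.
  have := find_size (walk_len e x y) (iota 0 #|T|); rewrite size_iota.
  case: (ltnP k (find (walk_len e x y) (iota 0 #|T|))) => // hl _.
  have := before_find 0 hl; by rewrite nth_iota // add0n w.
by apply: leq_trans hk; have := find_size (walk_len e x y) (iota 0 #|T|); rewrite size_iota.
Qed.

Lemma dist_walk x y : connect e x y -> walk_len e x y (dist e x y).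
Proof.
move=> /connectP[p pp ->].
case: (shortenP pp) => p' pp' up' _.
have hw : walk_len e x (last x p') (size p') by apply/walk_lenP; exists p'.
have hs : size p' < #|T|.
  by have := max_card (mem (x :: p')); move/card_uniqP: up' => ->.
have hh : has (walk_len e x (last x p')) (iota 0 #|T|).
  by apply/hasP; exists (size p') => //; rewrite mem_iota.
have := nth_find 0 hh; rewrite /dist nth_iota ?add0n //.
by have := hh; rewrite has_find size_iota.
Qed.


Lemma dist_refl x : dist e x x = 0.
Proof.
apply/eqP; rewrite -leqn0; apply: dist_le; apply/walk_lenP; by exists [::].
Qed.

Lemma dist_adj x a b : connect e x a -> e a b -> dist e x b <= (dist e x a).+1.
Proof.
move=> /dist_walk /walk_lenP [p [sp pp lp]] eab.
apply: dist_le; apply/walk_lenP; exists (rcons p b).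
by rewrite size_rcons sp rcons_path pp lp eab last_rcons.
Qed.

Definition ball x i := [set z | dist e x z <= i].

Lemma card_ball x i : #|ball x i| = u_ e x i.
Proof.
rewrite /u_; elim: i => [|i IH].
  rewrite big_nat1 /s_ /layer; apply: eq_card => z; by rewrite !inE leqn0.
rewrite big_nat_recr //= -IH.
have -> : ball x i.+1 = ball x i :|: layer e x i.+1.
  by apply/setP => z; rewrite !inE leq_eqVlt ltnS orbC eq_sym.
rewrite cardsU; have -> : ball x i :&: layer e x i.+1 = set0.
  apply/setP => z; rewrite !inE; apply/negbTE; apply/negP => /andP[h /eqP h2].
  by rewrite h2 ltnn in h.
by rewrite cards0 subn0.
Qed.

End D.

Lemma crossing (T : finType) (e : rel T) (A : {set T}) x0 q :
  path e x0 q -> (x0 \in A) != (last x0 q \in A) ->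
  exists ab, [/\ ab \in zip (x0 :: q) q, e ab.1 ab.2 & (ab.1 \in A) != (ab.2 \in A)].
Proof.
elim: q x0 => [|y q IH] x0 /=; first by rewrite eqxx.
move=> /andP[exy pq] hne.
case: (boolP ((x0 \in A) != (y \in A))) => h.
  by exists (x0, y); rewrite inE eqxx.
have [ab [h1 h2 h3]] : exists ab, [/\ ab \in zip (y :: q) q, e ab.1 ab.2 & (ab.1 \in A) != (ab.2 \in A)].
  apply: IH => //; move: h hne; by case: (x0 \in A); case: (y \in A).
by exists ab; rewrite inE h1 orbT.
Qed.

Lemma add_block (T : finType) (AA : {set T}) P D (B : {set T}) :
  partition P D -> [disjoint B & D] -> #|B| = 2 -> #|B :&: AA| <= 1 ->
  (forall B', B' \in P -> #|B'| == 2 /\ #|B' :&: AA| <= 1) ->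
  partition (B |: P) (B :|: D) /\
  (forall B', B' \in B |: P -> #|B'| == 2 /\ #|B' :&: AA| <= 1).
Proof.
move=> pP dB cB cBA hP; split.
  apply: partitionU1 => //; apply/eqP => B0; by rewrite B0 cards0 in cB.
move=> B'; rewrite !inE => /orP[/eqP->|]; last exact: hP.
by rewrite cB.
Qed.

Lemma pairing_ex (T : finType) (AA : {set T}) n : forall A C : {set T},
  #|A| + #|C| <= n -> A \subset AA -> [disjoint C & AA] -> #|A| <= #|C| ->
  ~~ odd (#|A| + #|C|) ->
  exists P, partition P (A :|: C) /\
    (forall B, B \in P -> #|B| == 2 /\ #|B :&: AA| <= 1).
Proof.
elim: n => [|n IH] A C.
  rewrite leqn0 addn_eq0 => /andP[/eqP/cards0_eq -> /eqP/cards0_eq ->] _ _ _ _.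
  exists set0; rewrite setU0 partition_set0 eqxx; split=> // B; by rewrite inE.
move=> hn sA dC hAC hev.
case: (set_0Vmem A) => [A0|[a aA]].
  case: (set_0Vmem C) => [C0|[c1 c1C]].
    exists set0; rewrite A0 C0 setU0 partition_set0 eqxx; split=> // B; by rewrite inE.
  have hC1 : 0 < #|C :\ c1|.
    move: hev; rewrite A0 cards0 add0n (cardsD1 c1 C) c1C add1n /=.
    by case: #|C :\ c1|.
  case/card_gt0P: hC1 => c2 c2C.
  have h1 : #|(set0 : {set T})| + #|C :\ c1 :\ c2| <= n.
    move: hn; rewrite A0 cards0 !add0n (cardsD1 c1 C) c1C (cardsD1 c2 (C :\ c1)) c2C; lia.
  have h2 : (set0 : {set T}) \subset AA by rewrite sub0set.
  have h3 : [disjoint C :\ c1 :\ c2 & AA].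
    apply: disjointWl dC; apply: subset_trans (subD1set _ _) (subD1set _ _).
  have h4 : #|(set0 : {set T})| <= #|C :\ c1 :\ c2| by rewrite cards0.
  have h5 : ~~ odd (#|(set0 : {set T})| + #|C :\ c1 :\ c2|).
    move: hev; rewrite A0 cards0 !add0n (cardsD1 c1 C) c1C (cardsD1 c2 (C :\ c1)) c2C /=.
    by rewrite /= negbK.
  have [P [pP hP]] := IH _ _ h1 h2 h3 h4 h5.
  have n12 : c2 != c1 by move: c2C; rewrite !inE => /andP[].
  have g1 : [disjoint [set c1; c2] & set0 :|: (C :\ c1 :\ c2)].
    rewrite disjoint_sym disjoints_subset; apply/subsetP => z; rewrite !inE.
    by move=> /andP[/negbTE -> /andP[/negbTE -> _]].
  have g2 : #|[set c1; c2]| = 2 by rewrite cards2 eq_sym n12.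
  have g3 : #|[set c1; c2] :&: AA| <= 1.
    suff -> : [set c1; c2] :&: AA = set0 by rewrite cards0.
    apply/setP => z; rewrite !inE; apply/negbTE; apply/negP => /andP[/orP[] /eqP -> h].
      by have := disjointFl dC h; rewrite c1C.
    by have := disjointFl dC h; rewrite (subsetP (subD1set _ _) c2 c2C).
  have [pP' hP'] := add_block pP g1 g2 g3 hP.
  exists ([set c1; c2] |: P); split => //.
  move: pP'; congr partition; apply/setP => z; rewrite A0 !inE.
  case: (z =P c1) => [->|_]; first by rewrite c1C.
  case: (z =P c2) => [->|_] /=; last by [].
  by move: c2C; rewrite !inE => /andP[_ ->].
have [c cC] : exists c, c \in C.
  apply/card_gt0P; apply: leq_trans hAC; apply/card_gt0P; by exists a.
have aAA : a \in AA := subsetP sA a aA.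
have cAA : c \in AA = false := disjointFr dC cC.
have cA : c \in A = false by apply/negbTE/negP => /(subsetP sA); rewrite cAA.
have aC : a \in C = false := disjointFl dC aAA.
have h1 : #|A :\ a| + #|C :\ c| <= n.
  move: hn; rewrite (cardsD1 a A) aA (cardsD1 c C) cC; lia.
have h2 : A :\ a \subset AA by apply: subset_trans (subD1set _ _) sA.
have h3 : [disjoint C :\ c & AA] by apply: disjointWl dC; apply: subD1set.
have h4 : #|A :\ a| <= #|C :\ c|.
  move: hAC; rewrite (cardsD1 a A) aA (cardsD1 c C) cC; lia.
have h5 : ~~ odd (#|A :\ a| + #|C :\ c|).
  move: hev; rewrite (cardsD1 a A) aA (cardsD1 c C) cC !add1n addSn addnS /=.
  by rewrite negbK.
have [P [pP hP]] := IH _ _ h1 h2 h3 h4 h5.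
have g1 : [disjoint [set a; c] & (A :\ a) :|: (C :\ c)].
  rewrite disjoint_sym disjoints_subset; apply/subsetP => z; rewrite !inE.
  case/orP => /andP[nz zin]; apply/negP => /orP[] /eqP hz; move: nz zin; rewrite hz.
  - by rewrite eqxx.
  - by rewrite cA.
  - by rewrite aC.
  - by rewrite eqxx.
have ac : a != c by apply/eqP => hac; move: aC; rewrite hac cC.
have g2 : #|[set a; c]| = 2 by rewrite cards2 ac.
have g3 : #|[set a; c] :&: AA| <= 1.
  suff -> : [set a; c] :&: AA = [set a] by rewrite cards1.
  apply/setP => z; rewrite !inE.
  by case: (z =P a) => [->|_]; [rewrite aAA | case: (z =P c) => [->|]; rewrite ?cAA].
have [pP' hP'] := add_block pP g1 g2 g3 hP.
exists ([set a; c] |: P); split => //.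
move: pP'; congr partition; apply/setP => z; rewrite !inE.
case: (z =P a) => [->|_]; first by rewrite aA.
case: (z =P c) => [->|_] /=; first by rewrite cC orbT.
by [].
Qed.

Lemma step_ar j A a b : j * (j - 1) <= 2 * A -> A + a <= a * b -> 1 <= A + a -> j <= a + b.
Proof.
move=> h1 h2 h3; rewrite leqNgt; apply/negP => h.
case: j h h1 => [//|[|j]] h h1.
  have : a * b = 0 by nia.
  lia.
nia.
Qed.

Lemma arith (s : nat -> nat) k : s 0 = 1 ->
  (forall j, j <= k -> \sum_(0 <= l < (2*j).+1) s l <= s (2*j) * s (2*j).+1) ->
  k <= s (2*k) + s (2*k).+1.
Proof.
move=> s0 H.
have U j : 1 <= \sum_(0 <= l < (2*j).+1) s l.
  by rewrite big_ltn // s0.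
have C : forall j, j <= k -> j * (j - 1) <= 2 * \sum_(0 <= l < 2*j) s l /\ j <= s (2*j) + s (2*j).+1.
  elim => [_|j IH hj].
    by [].
  have [IH1 IH2] := IH (ltnW hj).
  have E : 2 * j.+1 = (2 * j).+2 by lia.
  have S : j.+1 * (j.+1 - 1) <= 2 * \sum_(0 <= l < 2*j.+1) s l.
    rewrite E !big_nat_recr //=; nia.
  split => //.
  apply: (step_ar S); last by have := U j.+1; rewrite big_nat_recr.
  by have := H _ hj; rewrite big_nat_recr.
by have [_ ->] := C k (leqnn k).
Qed.

Section Cut.
Variables (T : finType) (e : rel T) (x : T).
Hypotheses (sg : simple_graph e) (pp : path_pairable e) (conn : forall u v : T, connect e u v).

Lemma layer_cross i a b : e a b -> dist e x a <= i -> i < dist e x b ->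
  dist e x a = i /\ dist e x b = i.+1.
Proof.
move=> eab ha hb.
have h1 := dist_adj (conn x a) eab.
have h2 : dist e x a <= (dist e x b).+1.
  by apply: dist_adj (conn x b) _; rewrite (proj1 sg).
lia.
Qed.

Lemma cut i : 2 * u_ e x i <= #|T| -> u_ e x i <= s_ e x i * s_ e x i.+1.
Proof.
move=> hu.
set A := ball e x i.
have cA : #|A| = u_ e x i by exact: card_ball.
have hC := cardsC A.
have g1 : #|A| + #|~: A| <= #|T| by rewrite hC.
have g2 : [disjoint ~: A & A] by rewrite disjoints_subset subxx.
have g3 : #|A| <= #|~: A| by lia.
have g4 : ~~ odd (#|A| + #|~: A|) by rewrite hC; exact: (proj1 pp).
have [P [pP hP]] := pairing_ex g1 (subxx A) g2 g3 g4.
rewrite setUCr in pP.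
have [Q [hQ1 hQ2]] : exists Q : {set T} -> T * seq T,
      (forall B, B \in P ->
         is_gpath e (Q B).1 (Q B).2 /\ B = [set (Q B).1; last (Q B).1 (Q B).2]) /\
      (forall B1 B2, B1 \in P -> B2 \in P -> B1 != B2 ->
         forall E, E \in path_edges (Q B1).1 (Q B1).2 ->
                   E \notin path_edges (Q B2).1 (Q B2).2).
  apply: (proj2 pp); rewrite /pairing pP /=; apply/forallP => B; apply/implyP => /hP [] //.
pose L := layer e x i; pose L' := layer e x i.+1.
pose R z (ab : T * T) := [exists B in P,
   (z \in B) && ([set ab.1; ab.2] \in path_edges (Q B).1 (Q B).2)].
pose f z := odflt (x, x) [pick ab in setX L L' | R z ab].
have ex : forall z, z \in A -> exists ab, (ab \in setX L L') && R z ab.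
  move=> z zA.
  have : z \in cover P by rewrite (cover_partition pP) inE.
  case/bigcupP => B BP zB.
  have [gp HB] := hQ1 B BP.
  have [c2 cap] := hP B BP.
  set p0 := (Q B).1 in gp HB; set q := (Q B).2 in gp HB.
  have hx : (p0 \in A) != (last p0 q \in A).
    case h0: (p0 \in A); case h1: (last p0 q \in A) => //=.
      have : B :&: A = B.
        apply/setIidPl/subsetP => w; rewrite HB in_set2 => /orP[] /eqP ->; by rewrite ?h0 ?h1.
      by move=> hh; move: cap; rewrite hh (eqP c2).
    by move: zB; rewrite HB in_set2 => /orP[] /eqP hz; move: zA; rewrite hz ?h0 ?h1.
  have [ab [abz eab abA]] := crossing (proj1 (andP gp)) hx.
  have pe : [set ab.1; ab.2] \in path_edges p0 q.
    exact: (map_f (fun ab : T * T => [set ab.1; ab.2]) abz).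
  case hA: (ab.1 \in A).
    have hB : ab.2 \in A = false by move: abA; rewrite hA; case: (ab.2 \in A).
    have hA' : dist e x ab.1 <= i by move: hA; rewrite inE.
    have hB' : i < dist e x ab.2 by move: hB; rewrite inE ltnNge => ->.
    have [l1 l2] := layer_cross eab hA' hB'.
    exists ab; apply/andP; split; first by rewrite !inE l1 l2 !eqxx.
    by apply/existsP; exists B; rewrite BP zB.
  have hB : ab.2 \in A by move: abA; rewrite hA; case: (ab.2 \in A).
  have hA' : i < dist e x ab.1 by move: hA; rewrite inE ltnNge => ->.
  have hB' : dist e x ab.2 <= i by move: hB; rewrite inE.
  have eba : e ab.2 ab.1 by rewrite (proj1 sg).
  have [l1 l2] := layer_cross eba hB' hA'.
  exists (ab.2, ab.1); apply/andP; split; first by rewrite !inE l1 l2 !eqxx.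
  by apply/existsP; exists B; rewrite BP zB /= setUC.
have fP : forall z, z \in A -> (f z \in setX L L') && R z (f z).
  move=> z zA; rewrite /f; case: pickP => [ab //|none].
  have [ab hab] := ex z zA; by move: (none ab); rewrite hab.
have inj : {in A &, injective f}.
  move=> z1 z2 z1A z2A hf.
  have /andP[_ /existsP[B1 /and3P[B1P z1B e1]]] := fP z1 z1A.
  have /andP[_ /existsP[B2 /and3P[B2P z2B e2]]] := fP z2 z2A.
  rewrite hf in e1.
  case: (B1 =P B2) => [hB|/eqP hB]; last by move: (hQ2 _ _ B1P B2P hB _ e1); rewrite e2.
  subst B2.
  have [_ cap] := hP B1 B1P.
  move/card_le1_eqP: cap => cap.
  by apply: cap; rewrite inE ?z1B ?z2B ?z1A ?z2A.
rewrite -cA -(card_in_imset inj) -cardsX; apply: subset_leq_card.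
apply/subsetP => _ /imsetP[z zA ->]; by have /andP[] := fP z zA.
Qed.
End Cut.

Theorem lemma1 (T : finType) (e : rel T) (d : nat) (x y : T) :
  simple_graph e ->
  path_pairable e ->
  (forall u v : T, connect e u v) ->
  (forall u v : T, dist e u v <= d) ->
  dist e x y = d ->
  20 <= d ->
  forall k : nat, 2 * u_ e x (2 * k).+1 <= #|T| ->
    k <= s_ e x (2 * k) + s_ e x (2 * k).+1.
Proof.
move=> sg pp conn _ _ _ k hk.
apply: (arith (s := s_ e x)).
  rewrite /s_ -(cards1 x); apply: eq_card => z; rewrite !inE.
  apply/eqP/eqP => [h|->]; last exact: dist_refl.
  have := dist_walk (conn x z); rewrite h => /walk_lenP[p [sp _ <-]].
  by case: p sp.
move=> j hj; apply: (cut sg pp conn); apply: leq_trans hk.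
rewrite leq_mul2l /u_ /=.
rewrite [X in _ <= X](big_cat_nat _ (n := (2 * j).+1)) //=; last by lia.
by rewrite leq_addr.
Qed.
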